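(* A ring $R$ is CSNC if and only if (1) $2\in\mathrm{Nil}(R)$, and (2) for every clean element $a\in R$ there exists an integer $k\ge 0$ such that $a^{2^k}$ is strongly nil-clean.
   Context: All rings are associative with identity $1$. For a ring $R$, $\mathrm{Id}(R)$, $U(R)$, $\mathrm{Nil}(R)$ denote the sets of idempotents, units and nilpotent elements. An element $a\in R$ is clean if $a=e+u$ for some $e\in\mathrm{Id}(R)$, $u\in U(R)$. An element $a$ is strongly nil-clean if $a=e+q$ with $e\in \mathrm{Id}(R)$, $q\in\mathrm{Nil}(R)$ and $eq=qe$. A ring $R$ is called CSNC if every clean element of $R$ is strongly nil-clean. *)

(* Defs.v *)
From mathcomp Require Import all_boot all_algebra.
Set Implicit Arguments. Unset Strict Implicit. Unset Printing Implicit Defensive.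
Import GRing.Theory.
Local Open Scope ring_scope.

Definition is_idempotent (R : unitRingType) (e : R) : Prop := e * e = e.
Definition is_nilpotent (R : unitRingType) (q : R) : Prop :=
  exists n : nat, q ^+ n = 0.
Definition is_clean (R : unitRingType) (a : R) : Prop :=
  exists e u : R, [/\ is_idempotent e, u \is a GRing.unit & a = e + u].
Definition is_strongly_nil_clean (R : unitRingType) (a : R) : Prop :=
  exists e q : R, [/\ is_idempotent e, is_nilpotent q, e * q = q * e & a = e + q].
Definition CSNC (R : unitRingType) : Prop :=
  forall a : R, is_clean a -> is_strongly_nil_clean a.

(* Main.v *)
Require Import Defs.
From mathcomp Require Import all_boot all_algebra.
From mathcomp Require Import zify.
Local Open Scope ring_scope.
Import GRing.Theory.

Section Aux.
Variable R : unitRingType.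
Implicit Types a b x y z u v w : R.

Lemma nil_high (q : R) n m : q ^+ n = 0 -> (n <= m)%N -> q ^+ m = 0.
Proof. by move=> h /subnKC <-; rewrite exprD h mul0r. Qed.
Arguments nil_high {q n m}.

Lemma nil_mul_comm (q r : R) : GRing.comm q r -> is_nilpotent q -> is_nilpotent (q * r).
Proof. by move=> c [n hn]; exists n; rewrite exprMn_comm // hn mul0r. Qed.

Lemma nil_add_comm u v : GRing.comm u v -> is_nilpotent u -> is_nilpotent v ->
  is_nilpotent (u + v).
Proof.
move=> c [n hn] [m hm]; exists (n + m)%N; rewrite exprDn_comm //.
apply: big1 => i _.
have [le|lt] := leqP n (n + m - i)%N.
  by rewrite (nil_high hn le) mul0r mul0rn.
rewrite (@nil_high v m i hm) ?mulr0 ?mul0rn //.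
move: lt (ltn_ord i); lia.
Qed.

Lemma nil_sq y : is_nilpotent (y * y) -> is_nilpotent y.
Proof. by move=> [n hn]; exists (2 * n)%N; rewrite exprM expr2. Qed.

Lemma snc_nil b : is_strongly_nil_clean b -> is_nilpotent (b - b * b).
Proof.
move=> [e [q [he hq heq ->]]].
have -> : e + q - (e + q) * (e + q) = q * (1 - e *+ 2 - q).
  rewrite !mulrDl !mulrDr he -heq mulr1 !mulrN mulrnAr -heq mulr2n !opprD !addrA.
  by rewrite [e + q]addrC addrK.
apply: nil_mul_comm => //.
apply: commrB; last exact: commr_refl.
apply: commrB; first exact: commr1.
by apply: commrMn.
Qed.

Lemma comm0r x : GRing.comm 0 x.
Proof. by rewrite /GRing.comm mul0r mulr0. Qed.
Lemma commr0' x : GRing.comm x 0.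
Proof. by rewrite /GRing.comm mul0r mulr0. Qed.

Ltac cdec := repeat first [ apply: commr_refl | apply: commr_nat | apply: commr1 | apply: commr0' | apply: commrB | apply: commrD | apply: commrM | apply: commrN | apply: commrX | (apply: commr_sum => ? _) ].
Ltac cp := cdec; try (apply: commr_sym; cdec).

Lemma bstep (c : R) : is_nilpotent (2 : R) ->
  is_nilpotent (c * c - (c * c) * (c * c)) -> is_nilpotent (c - c * c).
Proof.
move=> h2 hc; apply: nil_sq.
set y := c - c * c.
have E : y * y = (c * c - (c * c) * (c * c)) + 2 * - (y * (c * c)).
  have -> : c * c - (c * c) * (c * c) = y * (c + c * c).
    by rewrite /y mulrBl !mulrDr [c * (c * c)]mulrA opprD addrA addrK.
  by rewrite mulr_natl mulr2n mulrDr !addrA mulrN mulrDr addrK.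
rewrite E; apply: nil_add_comm; first by rewrite /y; cp.
  by [].
by apply: nil_mul_comm => //; rewrite /y; cp.
Qed.

Definition J (x : R) n y := exists c : nat -> R,
  (forall i, GRing.comm (c i) x) /\ y = \sum_(i < n.+1) x ^+ i * 2 ^+ (n - i) * c i.

Lemma J0 x y : GRing.comm y x -> J x 0 y.
Proof. by move=> h; exists (fun _ => y); split => //; rewrite big_ord1 !expr0 !mul1r. Qed.

Lemma JD x n y z : J x n y -> J x n z -> J x n (y + z).
Proof.
move=> [c [hc ->]] [d [hd ->]]; exists (fun i => c i + d i); split.
  by move=> i; apply: commr_sym; apply: commrD; apply: commr_sym.
by rewrite -big_split /=; apply: eq_bigr => i _; rewrite mulrDr.
Qed.

Lemma JX x n y w : J x n y -> GRing.comm w x -> J x n.+1 (y * x * w).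
Proof.
move=> [c [hc ->]] hw; exists (fun i => if i is i'.+1 then c i' * w else 0); split.
  case=> [|i]; first exact: comm0r.
  by apply: commr_sym; apply: commrM; apply: commr_sym.
rewrite [RHS]big_ord_recl /= mulr0 add0r mulr_suml mulr_suml; apply: eq_bigr => i _.
rewrite /bump /= add1n subSS exprSr -!mulrA; congr (_ * _).
rewrite add0n [c i * (x * w)]mulrA (hc i) -mulrA [_ ^+ _ * (x * _)]mulrA.
by rewrite -(commrX (n - i) (commr_nat x 2)) -!mulrA.
Qed.

Lemma J2 x n y w : J x n y -> GRing.comm w x -> J x n.+1 (y * 2 * w).
Proof.
move=> [c [hc ->]] hw; exists (fun i => if (i < n.+1)%N then c i * w else 0); split.
  move=> i; case: ifP => _; last exact: comm0r.
  by apply: commr_sym; apply: commrM; apply: commr_sym.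
rewrite [RHS]big_ord_recr /= ltnn mulr0 addr0 mulr_suml mulr_suml; apply: eq_bigr => i _.
rewrite ltn_ord subSn; last by rewrite -ltnS.
rewrite exprSr -!mulrA; do 2 congr (_ * _).
by rewrite mulrA (commr_nat (c i) 2) -mulrA.
Qed.

Lemma Jz x N y : x ^+ N = 0 -> (2 : R) ^+ N = 0 -> J x (N + N) y -> y = 0.
Proof.
move=> hx h2 [c [_ ->]]; apply: big1 => i _.
have [le|lt] := leqP N i.
  by rewrite (nil_high hx le) !mul0r.
rewrite (@nil_high 2 N (N + N - i) h2) ?mulr0 ?mul0r //; lia.
Qed.

Lemma identE (c : R) : c * c - (c * c) * (c * c) =
  (c - c * c) * (c - c * c) + (c - c * c) * 2 * (c * c).
Proof.
set y := c - c * c.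
have -> : c * c - (c * c) * (c * c) = y * (c + c * c).
  by rewrite /y mulrBl !mulrDr [c * (c * c)]mulrA opprD addrA addrK.
rewrite -mulrA -mulrDr; congr (_ * _).
by rewrite mulr_natl mulr2n /y addrA subrK.
Qed.

Lemma geom (a : R) n : a - a ^+ n.+1 = (a - a * a) * \sum_(i < n) a ^+ i.
Proof.
elim: n => [|n IH]; first by rewrite big_ord0 mulr0 expr1 subrr.
rewrite big_ord_recr /= mulrDr -IH mulrBl -mulrA -!exprS.
by rewrite addrA subrK.
Qed.

Lemma lemC (a : R) : is_nilpotent (2 : R) -> is_nilpotent (a - a * a) ->
  is_strongly_nil_clean a.
Proof.
move=> [n2 hn2] [n1 hn1].
set x := a - a * a.
pose N := (n1 + n2)%N.
have hxN : x ^+ N = 0 by apply: (nil_high hn1); rewrite /N leq_addr.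
have h2N : (2 : R) ^+ N = 0 by apply: (nil_high hn2); rewrite /N leq_addl.
pose g n := \sum_(i < n) a ^+ i.
have G : forall n, (0 < n)%N -> a - a ^+ n = x * g n.-1.
  by move=> n /prednK {1}<-; rewrite geom.
pose cm m := a ^+ (2 ^ m).
have cmS : forall m, cm m * cm m = cm m.+1.
  by move=> m; rewrite /cm -exprD expnS mul2n addnn.
pose s m := g (2 ^ m.+1).-1 - g (2 ^ m).-1.
have xs : forall m, cm m - cm m * cm m = x * s m.
  move=> m; rewrite /s mulrBr -!G ?expn_gt0 // cmS.
  by rewrite opprB [RHS]addrC addrA subrK.
have JJ : forall m, J x m (cm m - cm m * cm m).
  elim=> [|m IH]; first by apply: J0; rewrite /x /cm; cp.
  rewrite -cmS identE {2}xs mulrA; apply: JD.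
    by apply: JX => //; rewrite /s /g /x; cp.
  by apply: J2 => //; rewrite /cm /x; cp.
have Z := Jz _ _ _ hxN h2N (JJ (N + N)%N).
exists (cm (N + N)%N), (a - cm (N + N)%N); split.
- by apply/esym/eqP; rewrite -subr_eq0 Z.
- rewrite G ?expn_gt0 //; apply: nil_mul_comm; first by rewrite /x /g; cp.
  by exists N.
- by rewrite /cm; cp.
- by rewrite addrC subrK.
Qed.
End Aux.
Theorem mainTheorem10 (R : unitRingType) :
  CSNC R <->
  (is_nilpotent (2 : R) /\
   forall a : R, is_clean a ->
     exists k : nat, is_strongly_nil_clean (a ^+ (2 ^ k)%N)).
Proof.
split.
  move=> H; split; last by move=> a /H ha; exists 0%N; rewrite expn0 expr1.
  have hc : is_clean (-1 : R).
    by exists 0, (-1); split; [rewrite /is_idempotent mul0r|exact: unitrN1|rewrite add0r].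
  have := @snc_nil R _ (H _ hc); rewrite mulrNN mulr1 -opprD => hn.
  have -> : (2 : R) = - (1 + 1) * -1 by rewrite mulrN1 opprK.
  by apply: nil_mul_comm => //; apply: commrN; apply: commr1.
move=> [h2 H] a /H [k hk].
apply: lemC => //.
have := @snc_nil R _ hk.
elim: k {hk} => [|k IH]; first by rewrite expn0 expr1.
move=> hk; apply: IH; apply: bstep => //.
by move: hk; rewrite -!exprD !addnn -!mul2n -!expnS.
Qed.
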